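(* Let $n\ge 3$, let $a_0,\ldots,a_{n-1}$ be indeterminates over $\mathbb{Q}$, and let $f=x^n+a_{n-1}x^{n-1}+\cdots+a_0$ with roots $r_1,\ldots,r_n$. Let $D_2\in\mathbb{Q}[a_0,\ldots,a_{n-1}]$ be the polynomial obtained by expressing $\prod_{1\le i,j,k\le n,\ i<j,\ j\ne k,\ k\ne i}(2r_k-r_i-r_j)$ in terms of $a_0,\ldots,a_{n-1}$ via Vieta's formulas. Then the total degree of $D_2$ in $(a_0,\ldots,a_{n-1})$ is $3(n-1)(n-2)/2$. *)

(* Defs.v *)
From mathcomp Require Import all_boot all_algebra.
From mathcomp Require Import mpoly.
Set Implicit Arguments. Unset Strict Implicit. Unset Printing Implicit Defensive.
Import GRing.Theory.
Local Open Scope ring_scope.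

(* Total degree of a multivariate polynomial: msize p = 1 + deg p (0 for p = 0). *)
Definition total_degree (n : nat) (R : nzRingType) (p : {mpoly R[n]}) : nat :=
  (msize p).-1.

(* The roots r_1..r_n are the variables 'X_0..'X_(n-1) of {mpoly rat[n]}. *)
Definition D2_roots (n : nat) : {mpoly rat[n]} :=
  \prod_(i : 'I_n) \prod_(j : 'I_n | (i < j)%N)
     \prod_(k : 'I_n | (k != i) && (k != j))
        ('X_k *+ 2 - 'X_i - 'X_j).

(* Vieta: the coefficient a_i (of x^i in the monic f) equals (-1)^(n-i) e_(n-i)(r). *)
Definition vieta_coeffs (n : nat) : n.-tuple {mpoly rat[n]} :=
  [tuple (-1) ^+ (n - i) * mesym n rat (n - i) | i < n].

(* Main.v *)
Require Import Defs.
From mathcomp Require Import all_boot all_algebra.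
From mathcomp Require Import mpoly.
From mathcomp Require Import all_order all_fingroup ssrcomplements zify.
Set Implicit Arguments. Unset Strict Implicit. Unset Printing Implicit Defensive.
Import Order.TTheory GRing.Theory.
Local Open Scope ring_scope.


Lemma lex_head n (m1 m2 : 'X_{1..n.+1}) : mdeg m1 = mdeg m2 -> (m1 <= m2)%O -> (m1 ord0 <= m2 ord0)%N.
Proof.
move=> e; rewrite leEmnm e lexi_cons lexx /= {e}.
rewrite !(mnm_nth 0%N).
case: m1 => [[[|x1 s1] h1]] //; case: m2 => [[[|x2 s2] h2]] //= .
rewrite lexi_cons leEnat. by case/andP.
Qed.

Definition Fac n (i j k : 'I_n) : {mpoly rat[n]} := 'X_k *+ 2 - 'X_i - 'X_j.

Lemma Fac_coeff n (i j k l : 'I_n) :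
  (Fac i j k)@_U_(l) = (k == l)%:R *+ 2 - (i == l)%:R - (j == l)%:R.
Proof. by rewrite /Fac !mcoeffB mcoeffMn !mcoeffXU. Qed.

Lemma Fac_nz n (i j k : 'I_n) : k != i -> k != j -> Fac i j k != 0.
Proof.
move=> ki kj; apply/eqP => h; have := congr1 (mcoeff U_(k)) h.
by rewrite Fac_coeff mcoeff0 eqxx eq_sym (negbTE ki) eq_sym (negbTE kj) !subr0.
Qed.

Lemma Fac_hom n (i j k : 'I_n) : Fac i j k \is 1.-homog.
Proof. apply: rpredB; [apply: rpredB; [apply: rpredMn|]|]; rewrite dhomogX; apply/eqP; exact: mdeg1. Qed.

Lemma lin_lead n (F : {mpoly rat[n.+1]}) : F != 0 -> F \is 1.-homog ->
  (mlead F) ord0 = (F@_U_(ord0) != 0).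
Proof.
move=> nz hom; have ml := mlead_supp nz.
have /eqP := dhomog_mf hom ml; rewrite mdeg_eq1 => /existsP [l /eqP el].
have [l0|l0] := eqVneq l ord0.
  by move: ml; rewrite el l0 mnm1E eqxx mcoeff_msupp => ->.
rewrite el mnm1E (negbTE l0).
suff -> : (F@_U_(ord0) != 0) = false by []. apply: negbTE; apply/negP => h; rewrite -mcoeff_msupp in h.
have le := msupp_le_mlead h; rewrite el in le.
have e : mdeg (U_(ord0) : 'X_{1..n.+1}) = mdeg U_(l) by rewrite !mdeg1.
by have := lex_head e le; rewrite !mnm1E eqxx (negbTE l0).
Qed.

Lemma Fac_lead0 n (i j k : 'I_n.+1) : (i < j)%N -> k != i -> k != j ->
  (mlead (Fac i j k)) ord0 = ((k == ord0) || (i == ord0)).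
Proof.
move=> ij ki kj; rewrite lin_lead ?Fac_nz ?Fac_hom // Fac_coeff.
have j0 : (j == ord0) = false.
  by apply/negbTE; apply: contraTneq ij => ->.
rewrite j0 subr0.
have [k0|k0] := eqVneq k ord0.
  have i0 : (i == ord0) = false by apply/negbTE; rewrite -k0 eq_sym.
  by rewrite i0 subr0.
have [i0|i0] := eqVneq i ord0; by [].
Qed.

Lemma D2_nz n : D2_roots n != 0.
Proof.
rewrite /D2_roots; apply/prodf_neq0 => i _; apply/prodf_neq0 => j _.
by apply/prodf_neq0 => k /andP [ki kj]; exact: (Fac_nz ki kj).
Qed.

Lemma D2_hom n : exists d, D2_roots n \is d.-homog.
Proof.
rewrite /D2_roots.
apply: (big_ind (fun q : {mpoly rat[n]} => exists d, q \is d.-homog)).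
- by exists 0%N; exact: dhomog1.
- by move=> x y [dx hx] [dy hy]; exists (dx + dy)%N; exact: dhomogM.
move=> i _; apply: (big_ind (fun q : {mpoly rat[n]} => exists d, q \is d.-homog)).
- by exists 0%N; exact: dhomog1.
- by move=> x y [dx hx] [dy hy]; exists (dx + dy)%N; exact: dhomogM.
move=> j _; apply: (big_ind (fun q : {mpoly rat[n]} => exists d, q \is d.-homog)).
- by exists 0%N; exact: dhomog1.
- by move=> x y [dx hx] [dy hy]; exists (dx + dy)%N; exact: dhomogM.
by move=> k _; exists 1%N; exact: (Fac_hom i j k).
Qed.

Lemma cnt_gt (n a : nat) : (\sum_(j < n | a < j) 1 = n - a.+1)%N.
Proof.
elim: n => [|n ih]; first by rewrite big_ord0.
rewrite big_mkcond big_ord_recr /= -big_mkcond ih.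
by case: ltnP => h; lia.
Qed.

Lemma cnt_tri (n : nat) : (\sum_(i < n) (n - i.+1))%N = 'C(n, 2).
Proof.
elim: n => [|n ih]; first by rewrite big_ord0.
rewrite big_ord_recl /= subn1 /=.
  rewrite (eq_bigr (fun i : 'I_n => n - i.+1)%N); last by move=> i _; rewrite /= subSS.
by rewrite ih binS bin1 addnC.
Qed.

Lemma cnt_neq2 n (j : 'I_n.+1) : j != ord0 ->
  (\sum_(k < n.+1 | (k != ord0) && (k != j)) 1)%N = n.-1.
Proof.
move=> j0; rewrite sum1dep_card.
have -> : [set k : 'I_n.+1 | (k != ord0) && (k != j)] = ~: [set ord0; j].
  by apply/setP => k; rewrite !inE negb_or.
have := cardsC [set ord0; j]; rewrite cards2 eq_sym j0 card_ord; lia.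
Qed.

Lemma cnt_one n (i j : 'I_n.+1) : i != ord0 -> j != ord0 ->
  (\sum_(k < n.+1 | (k != i) && (k != j)) (k == ord0 : nat))%N = 1%N.
Proof.
move=> i0 j0; rewrite big_mkcond (bigD1 ord0) //= eq_sym i0 eq_sym j0 /= big1 // => k k0.
by rewrite (negbTE k0); case: ifP.
Qed.

Lemma count_all n :
  (\sum_(i < n.+1) \sum_(j < n.+1 | (i < j)%N) \sum_(k < n.+1 | (k != i) && (k != j))
      ((k == ord0) || (i == ord0) : nat))%N = (n * n.-1 + 'C(n, 2))%N.
Proof.
rewrite big_ord_recl /=; congr (_ + _)%N.
  rewrite (eq_bigr (fun j => n.-1)); last first.
    move=> j j0; rewrite (eq_bigr (fun _ => 1%N)); last by move=> k _; rewrite eqxx orbT.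
    by apply: cnt_neq2; rewrite -lt0n.
  rewrite big_mkcond big_ord_recl /=.
  rewrite (eq_bigr (fun _ => n.-1)); last by [].
  by rewrite add0n big_const_ord iter_addn_0 mulnC.
rewrite -cnt_tri; apply: eq_bigr => i _.
rewrite (eq_bigr (fun _ => 1%N)); last first.
  move=> j ij; rewrite (eq_bigr (fun k : 'I_n.+1 => (k == ord0 : nat))); last first.
    by move=> k _; have -> : (lift ord0 i == ord0) = false by []; rewrite orbF.
  apply: cnt_one => //; apply: contraTneq ij => ->; by [].
by rewrite cnt_gt /bump leq0n add1n.
Qed.

Lemma D2_lead n : (2 <= n)%N -> (mlead (D2_roots n.+1)) ord0 = (3 * (n.+1 - 1) * (n.+1 - 2) %/ 2)%N.
Proof.
move=> n2; rewrite /D2_roots mlead_prod; last first.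
  move=> i _ _; apply/prodf_neq0 => j _; apply/prodf_neq0 => k /andP [ki kj].
  exact: Fac_nz.
rewrite mnm_sumE.
rewrite (eq_bigr (fun i : 'I_n.+1 => \sum_(j < n.+1 | (i < j)%N) \sum_(k < n.+1 | (k != i) && (k != j))
      ((k == ord0) || (i == ord0) : nat))%N); last first.
  move=> i _; rewrite mlead_prod; last first.
    move=> j _ _; apply/prodf_neq0 => k /andP [ki kj]; exact: Fac_nz.
  rewrite mnm_sumE; apply: eq_bigr => j ij.
  rewrite mlead_prod; last by move=> k _ /andP [ki kj]; exact: Fac_nz.
  rewrite mnm_sumE; apply: eq_bigr => k /andP [ki kj].
  exact: (Fac_lead0 ij ki kj).
rewrite count_all bin2 (_ : (n.+1 - 1 = n)%N); last by lia.
rewrite (_ : (n.+1 - 2 = n.-1)%N); last by lia.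
rewrite -divn2 -mulnA (_ : (3 * (n * n.-1) = (n * n.-1) * 2 + n * n.-1)%N); last by lia.
by rewrite divnMDl.
Qed.



Lemma msymXU n (s : 'S_n) (i : 'I_n) : msym s ('X_i : {mpoly rat[n]}) = 'X_(s i).
Proof. by rewrite /msym mmapX mmap1U. Qed.

Lemma msym_Fac n (s : 'S_n) (i j k : 'I_n) : msym s (Fac i j k) = Fac (s i) (s j) (s k).
Proof. by rewrite /Fac !msymB msymMn !msymXU. Qed.

Lemma D2_sym n : D2_roots n \is symmetric.
Proof.
apply/issymP => s.
pose H (i j : 'I_n) := \prod_(k : 'I_n | (k != i) && (k != j)) Fac i j k.
have HC i j : H i j = H j i.
  apply: eq_big => [k|k _]; first by rewrite andbC.
  by rewrite /Fac addrAC.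
have Hs i j : msym s (H i j) = H (s i) (s j).
  rewrite /H rmorph_prod /= [RHS](reindex_inj (@perm_inj _ s)) /=.
  apply: eq_big => [k|k _]; first by rewrite !(inj_eq perm_inj).
  exact: msym_Fac.
have D2E : D2_roots n = \prod_(p : 'I_n * 'I_n | (p.1 < p.2)%N) H p.1 p.2.
  by rewrite /D2_roots pair_big_dep /=.
rewrite D2E rmorph_prod /=.
under eq_bigr do rewrite Hs.
pose g (p : 'I_n * 'I_n) := if (p.1 < p.2)%N == (s p.1 < s p.2)%N then (s p.1, s p.2) else (s p.2, s p.1).
have ginj : injective g.
  move=> [a b] [c d]; rewrite /g /=.
  case: ifP => h1; case: ifP => h2; case => /perm_inj e1 /perm_inj e2; subst => //;
  move: h1 h2; case: (ltngtP c d) => cd; case: (ltngtP (s c) (s d)) => scd //=;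
  try (by move=> *; congr (_, _); apply: val_inj);
  by move: scd => /val_inj /perm_inj e; rewrite e ltnn in cd.
rewrite [RHS](reindex_inj ginj) /=.
apply: eq_big => [p|p _]; case: p => a b; rewrite /g /=.
  case: ifP => /= h; [by move/eqP: h | move: h].
  by case: (ltngtP a b) => ab; case: (ltngtP (s a) (s b)) => sab //=; move: sab => /val_inj /perm_inj e; rewrite e ltnn in ab.
case: ifP => _ /=; first by [].
by rewrite HC.
Qed.
Section Core.
Context (n : nat) (R : comRingType).
Local Notation S := [tuple mesym n R i.+1 | i < n].

Lemma my_mlead_XS m :
  mlead ('X_[R, m] \mPo S) = [multinom \sum_(j : 'I_n | i <= j) (m j) | i < n].
Proof.
rewrite comp_mpolyX mlead_prod_proper=> /=; last first.
  move=> i _ _; rewrite tnth_map tnth_ord_tuple.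
  rewrite mleadX_proper /= ?mleadc_mesym //; last exact/lreg1.
  by rewrite mleadcX ?mleadc_mesym //; apply/lregX/lreg1.
pose F (i : 'I_n) := [multinom (j <= i) * (m i) | j < n].
rewrite (eq_bigr F) {}/F=> [|i _]; last first.
  rewrite tnth_map tnth_ord_tuple mleadX_proper.
    rewrite mlead_mesym //; apply/mnmP=> j.
    by rewrite mulmnE !mnmE mulnC ltnS.
  by rewrite mleadc_mesym //; apply/lreg1.
apply/mnmP=> i; apply/esym; rewrite mnm_sumE mnmE big_mkcond /=.
apply/eq_bigr=> j _; rewrite mnmE; case: leqP=> _.
  by rewrite mul1n. by rewrite mul0n.
Qed.

Lemma my_mleadc_XS l : mleadc ('X_[R, l] \mPo S) = 1.
Proof.
rewrite comp_mpolyX mlead_prod_proper ?mleadc_prod; last first.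
  move=> /= i _ _; rewrite tnth_map tnth_ord_tuple.
  rewrite mleadX_proper // ?mleadcX ?mleadc_mesym //.
    exact/lregX/lreg1. exact/lreg1.
rewrite (eq_bigr (fun _ => 1)) /=; last first.
  move=> i _; rewrite tnth_map tnth_ord_tuple.
  rewrite mleadX_proper ?mleadcX ?mleadc_mesym //.
    by rewrite expr1n. exact/lreg1.
by rewrite prodr_const expr1n.
Qed.

Lemma my_free_XS : injective (fun m => mlead ('X_[R, m] \mPo S)).
Proof.
move=> m1 m2; apply: contra_eq.
move=> ne_m1m2; apply/negP=> /eqP eqXS.
pose F (m : 'X_{1..n}) i := (\sum_(j : 'I_n | i <= j) (m j))%N.
have {eqXS} eqF i: F m1 i = F m2 i.
  case: (ssrnat.ltnP i n)=> [lt_in|le_ni]; last first.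
    rewrite /F !big1 //= => j /(leq_trans le_ni);
    by rewrite leqNgt ltn_ord.
  by move/mnmP/(_ (Ordinal lt_in)): eqXS; rewrite !my_mlead_XS !mnmE.
apply/negP: ne_m1m2; rewrite negbK; apply/eqP/mnmP=> i.
rewrite -[i in m1 i]rev_ordK -[i in m2 i]rev_ordK.
pose G (m : 'X_{1..n}) i := nth 0%N m (n-i.+1); rewrite !(mnm_nth 0%N) /=.
apply/(@psumn_eq n (G m1) (G m2)); rewrite ?subnSK ?leq_subr //.
move=> j le_jn; have Geq (m : 'X_{1..n}): (\sum_(i < n | i < j) G m i = F m (n-j))%N.
  rewrite (reindex_inj rev_ord_inj) /= /F; apply/eq_big=> l /=.
  + by rewrite subnSK // !leq_subLR addnC.
  + by move=> _; rewrite /G subnS subKn //= (mnm_nth 0%N).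
by rewrite !Geq.
Qed.

Lemma lead_join (t : {mpoly R[n]}) : t != 0 ->
  exists2 m0, m0 \in msupp t & 
   mlead (t \mPo S) = mlead ('X_[R, m0] \mPo S) /\
   forall m, m \in msupp t -> (mlead ('X_[R, m] \mPo S) <= mlead ('X_[R, m0] \mPo S))%O.
Proof.
move=> nz_t.
have h m: m \in msupp t -> mlead (t@_m *: ('X_[R, m] \mPo S)) = mlead ('X_[R, m] \mPo S).
  move=> m_in_t; rewrite mleadZ_proper // my_mleadc_XS.
  by rewrite mulr1 mcoeff_eq0 m_in_t.
rewrite comp_mpolyEX mlead_sum ?filter_predT; last first.
  rewrite (iffLR (eq_in_map _ _ _) h).
  apply/(@uniqP _ 0%MM) => i j; rewrite size_map.
  move=> lti ltj; rewrite !(nth_map 0%MM) // => /my_free_XS.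
  exact: (can_in_inj (nthK _ _)).
rewrite big_seq (eq_bigr _ h) -big_seq.
case: (eq_bigjoin (fun m => mlead ('X_[R, m] \mPo S)) _ (r := msupp t)).
  exact/le_total. by rewrite msupp_eq0.
move=> /= m m_in_t /eqP lmm; exists m => //; split => //.
move=> m' m'_in; rewrite -lmm.
exact: (joins_sup_seq (fun m => mlead ('X_[R, m] \mPo S))).
Qed.
End Core.

Lemma sumE0 n (m : 'X_{1..n.+1}) :
  (\sum_(j < n.+1 | (nat_of_ord (@ord0 n) <= j)%N) m j)%N = mdeg m.
Proof. by rewrite mdegE big_mkcond /=; apply: eq_bigr => j _; by []. Qed.

Lemma key (n : nat) (R : comRingType) (t : {mpoly R[n.+1]}) d :
  t != 0 -> t \is d.-homog for mnmwgt ->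
  (msize t).-1 = (mlead (t \mPo [tuple mesym n.+1 R i.+1 | i < n.+1])) ord0.
Proof.
move=> nz_t homt.
have [m0 m0_in [-> hmax]] := lead_join nz_t.
rewrite my_mlead_XS mnmE sumE0.
have dXS m : m \in msupp t -> mdeg (mlead ('X_[R, m] \mPo [tuple mesym n.+1 R i.+1 | i < n.+1])) = d.
  move=> m_in.
  have nz : ('X_[R, m] \mPo [tuple mesym n.+1 R i.+1 | i < n.+1]) != 0.
    by rewrite -mleadc_eq0 my_mleadc_XS oner_eq0.
  rewrite (dhomog_mf (dhomog_XS R m) (mlead_supp nz)).
  exact: (dhomog_mf homt m_in).
rewrite -(mlead_deg nz_t) /=; apply/eqP; rewrite eqn_leq; apply/andP; split.
  have lt := hmax _ (mlead_supp nz_t).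
  have eqd : mdeg (mlead ('X_[R, mlead t] \mPo [tuple mesym n.+1 R i.+1 | i < n.+1])) =
             mdeg (mlead ('X_[R, m0] \mPo [tuple mesym n.+1 R i.+1 | i < n.+1])).
    by rewrite !dXS // mlead_supp.
  by have := lex_head eqd lt; rewrite !my_mlead_XS !mnmE !sumE0.
by rewrite -ltnS (mlead_deg nz_t) msize_mdeg_lt.
Qed.


Section Aux.
Context (R : idomainType).

Lemma comp_mpolyA n k l (p : {mpoly R[n]}) (lq : n.-tuple {mpoly R[k]}) (lr : k.-tuple {mpoly R[l]}) :
  (p \mPo lq) \mPo lr = p \mPo [tuple (tnth lq i \mPo lr) | i < n].
Proof.
rewrite (comp_mpolyEX p lq) (comp_mpolyEX p [tuple _ | i < n]) raddf_sum /=.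
apply: eq_bigr => m _; rewrite comp_mpolyZ; congr (_ *: _).
rewrite !comp_mpolyX rmorph_prod /=; apply: eq_bigr => i _.
by rewrite rmorphXn tnth_mktuple.
Qed.

Lemma msizeM_le' n (p q : {mpoly R[n]}) : (msize (p * q) <= (msize p + msize q).-1)%N.
Proof.
have [->|nz_p] := eqVneq p 0; first by rewrite mul0r msize0.
have [->|nz_q] := eqVneq q 0; first by rewrite mulr0 msize0.
by rewrite msizeM.
Qed.

Lemma msizeX_le n (p : {mpoly R[n]}) d k : (msize p <= d.+1)%N -> (msize (p ^+ k) <= (d * k).+1)%N.
Proof.
move=> hp; elim: k => [|k ih]; first by rewrite expr0 msize1 muln0.
rewrite exprS (leq_trans (msizeM_le' _ _)) //.
rewrite mulnS; move: hp ih; set x := (d * k)%N; lia.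
Qed.

Lemma msize_prod_le n (I : Type) (r : seq I) (P : pred I) (F : I -> {mpoly R[n]}) (d : I -> nat) :
  (forall i, P i -> msize (F i) <= (d i).+1)%N ->
  (msize (\prod_(i <- r | P i) F i) <= (\sum_(i <- r | P i) d i).+1)%N.
Proof.
move=> h; elim/big_rec2: _ => [|i s q Pi ih]; first by rewrite msize1.
rewrite (leq_trans (msizeM_le' _ _)) //.
move: (h i Pi) ih; lia.
Qed.

Lemma msize_comp_le n k (q : {mpoly R[n]}) (lq : n.-tuple {mpoly R[k]}) :
  (forall i, msize (tnth lq i) <= 2)%N -> (msize (q \mPo lq) <= msize q)%N.
Proof.
move=> h; rewrite comp_mpolyE (leq_trans (msize_sum _ _ _)) //.
apply/bigmax_leqP_seq => m m_in _.
rewrite (leq_trans (msizeZ_le _ _)) // (leq_trans _ (msize_mdeg_lt m_in)) //.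
rewrite mdegE; apply: msize_prod_le => i _.
rewrite -{2}[m i]mul1n; exact: msizeX_le.
Qed.

Lemma msize_signX n a (j : 'I_n) : (msize ((-1) ^+ a * 'X_j : {mpoly R[n]}) <= 2)%N.
Proof.
rewrite (leq_trans (msizeM_le' _ _)) // msizeX mdeg1 -signr_odd.
by case: (odd a); rewrite ?expr1 ?expr0 ?msizeN msize1.
Qed.
End Aux.

Lemma sign_twice (R : pzRingType) a : (-1) ^+ (a + a) = 1 :> R.
Proof. by rewrite addnn -mul2n exprM sqrrN expr1n expr1n. Qed.

Unset Implicit Arguments.

(* D2 : {mpoly rat[n]} in the indeterminates a_0..a_(n-1) ('X_i = a_i). *)
Theorem proposition3 (n : nat) (hn : (3 <= n)%N) :
  (exists D2 : {mpoly rat[n]}, D2 \mPo vieta_coeffs n = D2_roots n) /\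
  (forall D2 : {mpoly rat[n]}, D2 \mPo vieta_coeffs n = D2_roots n ->
     total_degree D2 = (3 * (n - 1) * (n - 2) %/ 2)%N).
Proof.
case: n hn => [//|n] hn.
pose S := [tuple mesym n.+1 rat i.+1 | i < n.+1].
pose W : n.+1.-tuple {mpoly rat[n.+1]} := [tuple (-1) ^+ (n.+1 - i) * 'X_(rev_ord i) | i < n.+1].
pose V : n.+1.-tuple {mpoly rat[n.+1]} := [tuple (-1) ^+ (i.+1) * 'X_(rev_ord i) | i < n.+1].
have vW : vieta_coeffs n.+1 = [tuple tnth W i \mPo S | i < n.+1].
  apply: eq_from_tnth => i; rewrite /vieta_coeffs !tnth_mktuple.
  rewrite rmorphM rmorphXn rmorphN1 /= comp_mpolyXU -tnth_nth tnth_mktuple /=.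
  by rewrite subnSK.
have WV : [tuple tnth W i \mPo V | i < n.+1] = [tuple 'X_i | i < n.+1].
  apply: eq_from_tnth => i; rewrite !tnth_mktuple.
  rewrite rmorphM rmorphXn rmorphN1 /= comp_mpolyXU -tnth_nth tnth_mktuple /=.
  rewrite mulrA -exprD rev_ordK /= subnSK // sign_twice mul1r.
  by [].
have VW : [tuple tnth V i \mPo W | i < n.+1] = [tuple 'X_i | i < n.+1].
  apply: eq_from_tnth => i; rewrite !tnth_mktuple.
  rewrite rmorphM rmorphXn rmorphN1 /= comp_mpolyXU -tnth_nth tnth_mktuple /=.
  rewrite mulrA -exprD rev_ordK /= subKn // sign_twice mul1r.
  by [].
have [d p_hom] := D2_hom n.+1.
split.
  have [t [tS _]] := sym_fundamental (D2_sym n.+1).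
  exists (t \mPo V); rewrite vW -(comp_mpolyA (t \mPo V) W S) (comp_mpolyA t V W) VW comp_mpoly_id.
  exact: tS.
move=> D2 hD2.
pose t := D2 \mPo W.
have tS : t \mPo S = D2_roots n.+1 by rewrite /t comp_mpolyA -vW.
have D2t : D2 = t \mPo V by rewrite /t comp_mpolyA WV comp_mpoly_id.
have eqsz : msize D2 = msize t.
  apply/eqP; rewrite eqn_leq; apply/andP; split.
    rewrite {1}D2t; apply: msize_comp_le => i; rewrite tnth_mktuple; exact: msize_signX.
  apply: msize_comp_le => i; rewrite tnth_mktuple; exact: msize_signX.
have hom_t : t \is d.-homog for mnmwgt by rewrite mwmwgt_homogE tS.
have nz_t : t != 0.
  by apply: contraNneq (D2_nz n.+1) => t0; rewrite -tS t0 comp_mpoly0.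
rewrite /total_degree eqsz (key nz_t hom_t) tS D2_lead //.
Qed.
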